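(* Let $N\ge3$ and let $a_1,\dots,a_N\in\mathbb{Z}^2$ with $\sum_i a_i=0$. Then $\theta_N(a_1,\dots,a_N)=\frac{N!}{3!}\mu_N(a_1,\dots,a_N)$.
   Context: For $v,w\in\mathbb{Z}^2$, $v\wedge w=\det(v\,|\,w)$ and $[v\wedge w]_+=q^{\frac12 v\wedge w}+q^{-\frac12 v\wedge w}$ for a formal variable $q^{1/2}$. Let $\Omega_N$ be the set of cyclic permutations: orbits of the action of the cyclic group of order $N$ on orderings $(\tilde\omega(1),\dots,\tilde\omega(N))$ of $\{1,\dots,N\}$ by rotating positions. For $\omega\in\Omega_N$ choose a representative $\tilde\omega$ and set $k(\omega)=\sum_{2\le i<j\le N}a_{\tilde\omega(i)}\wedge a_{\tilde\omega(j)}$ (independent of the representative since $\sum a_i=0$). Define $\mu_N(a_1,\dots,a_N)=\sum_{\omega\in\Omega_N}q^{k(\omega)/2}$. The Blechman–Shustin multiplicity is defined recursively by $\theta_3(a_1,a_2,a_3)=[a_1\wedge a_2]_+$ and, for $N\ge4$, $\theta_N(a_1,\dots,a_N)=\sum_{1\le i<j\le N}\theta_{N-1}(a_1,\dots,\hat a_i,\dots,\hat a_j,\dots,a_N,a_i+a_j)\,\theta_3(a_i,a_j,-(a_i+a_j))$, where hats denote omission. *)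

(* Defs.v *)
From HB Require Import structures.
From mathcomp Require Import all_boot all_order all_algebra all_fingroup.
Set Implicit Arguments. Unset Strict Implicit. Unset Printing Implicit Defensive.
Import Order.TTheory GRing.Theory Num.Theory.
Local Open Scope ring_scope.

(* The formal variable q^{1/2} is represented by
   an arbitrary unit t of an arbitrary commutative unit ring R, so that
   q^{x/2} = t ^ x (integer power). *)

Definition vec := (int * int)%type.

Definition wedge (v w : vec) : int := v.1 * w.2 - v.2 * w.1.

Definition bracket (R : unitRingType) (t : R) (v w : vec) : R :=
  t ^ (wedge v w) + t ^ (- wedge v w).

Definition drop2 (l : seq vec) (i j : nat) : seq vec :=
  [seq nth 0 l k | k <- iota 0 (size l) & (k != i) && (k != j)].

Fixpoint theta_rec (R : unitRingType) (t : R) (n : nat) (l : seq vec) : R :=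
  match n with
  | 0 => bracket t (nth 0 l 0) (nth 0 l 1)
  | n'.+1 =>
      \sum_(i < size l) \sum_(j < size l | (i < j)%N)
        theta_rec t n' (rcons (drop2 l i j) (nth 0 l i + nth 0 l j))
        * bracket t (nth 0 l i) (nth 0 l j)
  end.

Definition theta (R : unitRingType) (t : R) (l : seq vec) : R :=
  theta_rec t (size l - 3) l.

(* Orderings (w(1),...,w(N)) of {1..N} are permutations s of 'I_N
   (0-indexed: s i = w(i+1)). *)
Definition cyc_orbit (N : nat) (s : 'S_N) : {set 'S_N} :=
  [set s' : 'S_N | [exists c : 'I_N, [forall i : 'I_N, forall j : 'I_N,
       (val j == (val i + val c) %% N)%N ==> (s' i == s j)]]].

Definition Omega (N : nat) : {set {set 'S_N}} :=
  [set cyc_orbit s | s : 'S_N].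

(* k(w) = sum_{2 <= i < j <= N} a_{w(i)} /\ a_{w(j)} (1-indexed);
   0-indexed: 1 <= i < j <= N-1 *)
Definition kappa (N : nat) (a : 'I_N -> vec) (s : 'S_N) : int :=
  \sum_(i : 'I_N | (0 < i)%N) \sum_(j : 'I_N | (i < j)%N) wedge (a (s i)) (a (s j)).

Definition mu (R : unitRingType) (t : R) (N : nat) (a : 'I_N -> vec) : R :=
  \sum_(O in Omega N) t ^ (kappa a (repr O)).

(* Main.v *)
Require Import Defs.
From HB Require Import structures.
From mathcomp Require Import all_boot all_order all_algebra all_fingroup.
From mathcomp Require Import ring zify.
Set Implicit Arguments. Unset Strict Implicit. Unset Printing Implicit Defensive.
Import Order.TTheory GRing.Theory Num.Theory.
Local Open Scope ring_scope.

Lemma wedgeDr v w1 w2 : wedge v (w1 + w2) = wedge v w1 + wedge v w2.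
Proof. rewrite /wedge /=. ring. Qed.
Lemma wedgeDl v1 v2 w : wedge (v1 + v2) w = wedge v1 w + wedge v2 w.
Proof. rewrite /wedge /=. ring. Qed.
Lemma wedgeNr v w : wedge v (- w) = - wedge v w.
Proof. rewrite /wedge /=. ring. Qed.
Lemma wedgeNl v w : wedge (- v) w = - wedge v w.
Proof. rewrite /wedge /=. ring. Qed.
Lemma wedge0r v : wedge v 0 = 0.
Proof. rewrite /wedge /=. ring. Qed.
Lemma wedge0l v : wedge 0 v = 0.
Proof. rewrite /wedge /=. ring. Qed.
Lemma wedgevv v : wedge v v = 0.
Proof. rewrite /wedge /=. ring. Qed.
Lemma wedgeC v w : wedge w v = - wedge v w.
Proof. rewrite /wedge /=. ring. Qed.

Lemma wedge_sumr (I : Type) (r : seq I) (P : pred I) (F : I -> vec) v :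
  wedge v (\sum_(i <- r | P i) F i) = \sum_(i <- r | P i) wedge v (F i).
Proof. exact: (big_morph (wedge v) (wedgeDr v) (wedge0r v)). Qed.

Fixpoint K (v : seq vec) : int :=
  if v is x :: v' then wedge x (\sum_(y <- v') y) + K v' else 0.

Lemma K_rcons (v : seq vec) x : K (rcons v x) = K v + wedge (\sum_(y <- v) y) x.
Proof.
elim: v => [|y v IH] /=.
  by rewrite !big_nil wedge0r wedge0l.
rewrite IH -cats1 big_cat /= big_seq1 big_cons wedgeDr wedgeDl.
by rewrite addrACA.
Qed.

Lemma K_rot1 (v : seq vec) : \sum_(y <- v) y = 0 -> K (rot 1 v) = K v.
Proof.
case: v => [|x w] //=; rewrite big_cons rot1_cons K_rcons => H.
have -> : \sum_(y <- w) y = - x by apply/eqP; rewrite -addr_eq0 addrC H.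
by rewrite wedgeNl wedgeNr wedgevv oppr0 addr0 add0r.
Qed.

Lemma K_rot i (v : seq vec) : \sum_(y <- v) y = 0 -> K (rot i v) = K v.
Proof.
move=> H; elim: i => [|i IH]; first by rewrite rot0.
case: (leqP (size v) i.+1) => Hi; first by rewrite rot_oversize.
have -> : rot i.+1 v = rot 1 (rot i v).
  by rewrite rot_add_mod ?add1n ?(ltnW Hi) //; lia.
have P : perm_eq (rot i v) v by rewrite perm_rot.
by rewrite K_rot1 ?IH // (perm_big _ P).
Qed.

Definition SS (R : unitRingType) (t : R) (f : nat -> vec) (I : seq nat) : R :=
  \sum_(s <- permutations I) t ^ K (map f s).

Lemma SS_expand (R : comUnitRingType) (t : R) (ht : t \is a GRing.unit)
  (f : nat -> vec) (I : seq nat) : uniq I -> (0 < size I)%N ->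
  SS t f I = \sum_(x <- I) t ^ wedge (f x) (\sum_(y <- rem x I) f y) * SS t f (rem x I).
Proof.
move=> uI sI; rewrite /SS (perm_big _ (permutationsE sI)) undup_id // big_allpairs_dep.
apply: eq_big_seq => x Hx; rewrite mulr_sumr; apply: eq_big_seq => s Hs.
rewrite /= exprzDr // big_map.
have P : perm_eq s (rem x I) by rewrite -mem_permutations.
by rewrite (perm_big _ P).
Qed.

Lemma SS_eq_in (R : unitRingType) (t : R) (f g : nat -> vec) (I : seq nat) :
  {in I, f =1 g} -> SS t f I = SS t g I.
Proof.
move=> efg; apply: eq_big_seq => s; rewrite mem_permutations => Hs.
congr (_ ^ K _); apply/eq_in_map => y Hy; apply: efg.
by rewrite -(perm_mem Hs).
Qed.

Lemma SS_nil (R : unitRingType) (t : R) f : SS t f [::] = 1.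
Proof. by rewrite /SS /= big_seq1 /= expr0z. Qed.

Lemma rem_map_uniq (h : nat -> nat) (I : seq nat) x :
  uniq (map h I) -> x \in I -> rem (h x) (map h I) = map h (rem x I).
Proof.
elim: I => [|y I IH] //= /andP [hy uI]; rewrite in_cons.
case: (eqVneq y x) => [-> _|nyx /= xI]; first by rewrite eqxx.
have -> : (h y == h x) = false.
  by apply/negbTE; apply: contraNneq hy => ->; apply: map_f.
by rewrite IH.
Qed.

Lemma SS_map (R : comUnitRingType) (t : R) (ht : t \is a GRing.unit)
  (f : nat -> vec) (h : nat -> nat) (I : seq nat) :
  uniq (map h I) -> SS t f (map h I) = SS t (f \o h) I.
Proof.
move: {-1}(size I) (erefl (size I)) => n; elim: n I => [|n IH] I sI uI.
  by case: I sI uI => // _ _; rewrite /= !SS_nil.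
have uI' : uniq I by move: uI; apply: map_uniq.
rewrite SS_expand // ?size_map ?sI // SS_expand ?sI // big_map.
apply: eq_big_seq => x Hx; rewrite rem_map_uniq // big_map IH //.
  by rewrite size_rem // sI.
by rewrite -rem_map_uniq // rem_uniq.
Qed.

Lemma sum_const_seq (V : nmodType) (T : Type) (s : seq T) (c : V) :
  \sum_(i <- s) c = c *+ size s.
Proof. by elim: s => [|x s IH]; rewrite ?big_nil ?big_cons ?IH ?mulrS ?mulr0n. Qed.

Lemma iotaS0 m : iota 0 m.+1 = rcons (iota 0 m) m.
Proof. by rewrite -addn1 iotaD /= cats1. Qed.

Lemma SS_rot (R : comUnitRingType) (t : R) (f : nat -> vec) (m : nat) :
  \sum_(k <- iota 0 m.+1) f k = 0 ->
  SS t f (iota 0 m.+1) = m.+1%:R * SS t f (iota 0 m).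
Proof.
move=> H0.
have P : perm_eq (iota 0 m.+1) (m :: iota 0 m) by rewrite iotaS0 perm_rcons perm_refl.
have H1 : f m + \sum_(k <- iota 0 m) f k = 0 by move: H0; rewrite (perm_big _ P) big_cons.
rewrite /SS (perm_big _ (perm_permutations P)). rewrite (perm_big _ (permutationsErot _ _)).
rewrite big_allpairs_dep mulr_sumr. apply: eq_big_seq => s.
rewrite mem_permutations => Hs.
have mNs : m \notin s by rewrite (perm_mem Hs) mem_iota add0n ltnn andbF.
rewrite memNindex // (perm_size Hs) size_iota addn1.
have -> : \sum_(i <- iota 0 m.+1) t ^ K [seq f i | i <- rot i (m :: s)] =
          \sum_(i <- iota 0 m.+1) t ^ K [seq f i | i <- m :: s].
  apply: eq_bigr => i _; rewrite map_rot K_rot //= big_cons big_map.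
  by rewrite (perm_big _ Hs).
rewrite sum_const_seq size_iota mulr_natl /= big_map (perm_big _ Hs).
have -> : \sum_(i <- iota 0 m) f i = - f m by apply/eqP; rewrite -addr_eq0 addrC H1.
by rewrite wedgeNr wedgevv oppr0 add0r.
Qed.

Definition J (n i j : nat) : seq nat := [seq k <- iota 0 n | (k != i) && (k != j)].

Lemma rem2_J n x y : rem y (rem x (iota 0 n)) = J n x y.
Proof.
rewrite rem_filter ?rem_uniq ?iota_uniq // rem_filter ?iota_uniq //.
rewrite -filter_predI; apply: eq_filter => k /=; exact: andbC.
Qed.

Lemma J_sym n i j : J n i j = J n j i.
Proof. by apply: eq_filter => k; rewrite andbC. Qed.

Lemma sum_rem (T : eqType) (s : seq T) x (F : T -> vec) :
  x \in s -> \sum_(y <- s) F y = F x + \sum_(y <- rem x s) F y.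
Proof. by move=> xs; rewrite (perm_big _ (perm_to_rem xs)) big_cons. Qed.

Lemma iota_index n : iota 0 n = index_iota 0 n.
Proof. by rewrite /index_iota subn0. Qed.

Lemma SS_key (R : comUnitRingType) (t : R) (ht : t \is a GRing.unit)
  (f : nat -> vec) (m : nat) :
  \sum_(k <- iota 0 m.+2) f k = 0 ->
  SS t f (iota 0 m.+2) =
  \sum_(i < m.+2) \sum_(j < m.+2 | (i < j)%N) SS t f (J m.+2 i j) * bracket t (f i) (f j).
Proof.
move=> H0; set n := m.+2.
have uI : uniq (iota 0 n) by apply: iota_uniq.
rewrite SS_expand // ?size_iota //.
have E : forall x, x \in iota 0 n ->
   t ^ wedge (f x) (\sum_(y <- rem x (iota 0 n)) f y) * SS t f (rem x (iota 0 n)) =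
   \sum_(y <- iota 0 n | y != x) t ^ wedge (f x) (f y) * SS t f (J n x y).
  move=> x xI.
  have Hx : \sum_(y <- rem x (iota 0 n)) f y = - f x.
    by apply/eqP; rewrite -addr_eq0 addrC -sum_rem // H0.
  rewrite Hx wedgeNr wedgevv oppr0 expr0z mul1r.
  rewrite SS_expand // ?rem_uniq // ?size_rem // ?size_iota //.
  rewrite -[RHS]big_filter -rem_filter //; apply: eq_big_seq => y yI.
  rewrite rem2_J; congr (_ ^ _ * _).
  move: Hx; rewrite (sum_rem _ yI) rem2_J => Hy.
  have -> : \sum_(z <- J n x y) f z = - f x - f y.
    by rewrite -Hy [f y + _]addrC addrK.
  by rewrite wedgeDr !wedgeNr wedgevv oppr0 addr0 (wedgeC (f x)) opprK.
rewrite (eq_big_seq _ E) iota_index big_mkord.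
have L1 : forall i j : 'I_n, ((nat_of_ord j != nat_of_ord i) && (i < j)%N) = (i < j)%N.
  move=> i j; apply/andP/idP => [[]//|h]; split=> //; apply/eqP => e; move: h; by rewrite e ltnn.
have L2 : forall i j : 'I_n, ((nat_of_ord j != nat_of_ord i) && ~~ (i < j)%N) = (j < i)%N.
  by move=> i j; rewrite -leqNgt ltn_neqAle.
under eq_bigr => i _ do rewrite big_mkord.
under eq_bigr => i _ do rewrite (bigID (fun j : 'I_n => (i < j)%N)) /=.
under eq_bigr => i _ do rewrite (eq_bigl _ _ (L1 i)) (eq_bigl _ _ (L2 i)).
rewrite big_split /=.
rewrite (exchange_big_dep xpredT) //= -big_split /=.
rewrite [RHS](exchange_big_dep xpredT) //=.
apply: eq_bigr => i _; rewrite -big_split /=; apply: eq_bigr => j ij.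
rewrite /bracket mulrDr mulrC; congr (_ + _).
by rewrite mulrC J_sym (wedgeC (f j) (f i)).
Qed.

Definition AA (R : unitRingType) (t : R) (l : seq vec) : R :=
  SS t (fun k => nth 0 l k) (iota 0 (size l).-1).

Lemma SS_1 (R : comUnitRingType) (t : R) (ht : t \is a GRing.unit) f y :
  SS t f [:: y] = 1.
Proof.
rewrite SS_expand //= big_seq1 ?eqxx SS_nil big_nil wedge0r expr0z mulr1 //.
Qed.

Lemma fact3_dvd m : (3`! %| (m.+3)`!)%N.
Proof. elim: m => [|m IH] //; rewrite factS; exact: dvdn_mull. Qed.

Lemma l_as_map (l : seq vec) : l = map (fun k => nth 0 l k) (iota 0 (size l)).
Proof. by rewrite -/(mkseq _ _) mkseq_nth. Qed.

Lemma sum_l (l : seq vec) :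
  \sum_(x <- l) x = \sum_(k <- iota 0 (size l)) nth 0 l k.
Proof. by rewrite {1}(l_as_map l) big_map. Qed.

Lemma main_list (R : comUnitRingType) (t : R) (ht : t \is a GRing.unit) (m : nat) :
  forall l : seq vec, size l = m.+3 -> \sum_(x <- l) x = 0 ->
  theta_rec t m l = ((m.+3)`! %/ 3`!)%:R * AA t l.
Proof.
elim: m => [|m IH] l sl s0.
  rewrite /= /AA sl /= SS_expand //= !big_cons big_nil /= !SS_1 // !mulr1 big_nil !addr0.
  rewrite divnn /= mul1r /bracket; congr (_ + _).
  by rewrite (wedgeC (nth 0 l 0)).
pose f := fun k => nth 0 l k.
have s0' : \sum_(k <- iota 0 m.+4) f k = 0 by rewrite -sl -sum_l.
rewrite /= sl.
have Hm : forall i j : 'I_(m.+4), (i < j)%N ->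
    theta_rec t m (rcons (drop2 l i j) (nth 0 l i + nth 0 l j)) =
    ((m.+3)`! %/ 3`!)%:R * SS t f (J m.+4 i j).
  move=> i j ij.
  have ij' : (i : nat) != j by rewrite ltn_eqF.
  have iI : (i : nat) \in iota 0 m.+4 by rewrite mem_iota ltn_ord.
  have jI : (j : nat) \in rem (nat_of_ord i) (iota 0 m.+4).
    rewrite rem_filter ?iota_uniq // mem_filter mem_iota ltn_ord andbT /= eq_sym; apply/andP; split => //.
  have dJ : drop2 l i j = map f (J m.+4 i j) by rewrite /drop2 sl.
  have sJ : size (J m.+4 i j) = m.+2.
    by rewrite -rem2_J size_rem // size_rem // size_iota.
  have uJ : uniq (J m.+4 i j) by rewrite filter_uniq // iota_uniq.
  rewrite IH; first last.
  - move: s0'; rewrite (sum_rem _ iI) (sum_rem _ jI) rem2_J => s1.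
    rewrite dJ -cats1 big_cat big_seq1 big_map.
    change (\sum_(y <- J m.+4 i j) f y + (nth 0 l i + nth 0 l j) = 0).
    by rewrite addrC -addrA; exact: s1.
  - by rewrite size_rcons dJ size_map sJ.
  congr (_ * _); rewrite /AA size_rcons dJ size_map sJ -pred_Sn.
  rewrite (@SS_eq_in _ _ _ (f \o nth 0 (J m.+4 i j))); last first.
    move=> k; rewrite mem_iota /= => kI.
    by rewrite nth_rcons size_map sJ kI (nth_map 0%N) // sJ.
  have E2 : map (nth 0 (J m.+4 i j)) (iota 0 m.+2) = J m.+4 i j.
    have -> : iota 0 m.+2 = iota 0 (size (J m.+4 i j)) by rewrite sJ.
    by rewrite -/(mkseq _ _) mkseq_nth.
  by rewrite -SS_map ?E2.
have -> : \sum_(i < m.+4) \sum_(j < m.+4 | (i < j)%N)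
    theta_rec t m (rcons (drop2 l i j) (nth 0 l i + nth 0 l j)) * bracket t (nth 0 l i) (nth 0 l j)
  = \sum_(i < m.+4) \sum_(j < m.+4 | (i < j)%N)
   ((m.+3)`! %/ 3`!)%:R * (SS t f (J m.+4 i j) * bracket t (f i) (f j)).
  by apply: eq_bigr => i _; apply: eq_bigr => j ij; rewrite Hm // mulrA.
have -> : forall c : R, \sum_(i < m.+4) \sum_(j < m.+4 | (i < j)%N)
   c * (SS t f (J m.+4 i j) * bracket t (f i) (f j)) =
   c * \sum_(i < m.+4) \sum_(j < m.+4 | (i < j)%N) SS t f (J m.+4 i j) * bracket t (f i) (f j).
  by move=> c; rewrite mulr_sumr; apply: eq_bigr => i _; rewrite mulr_sumr.
rewrite -SS_key // SS_rot // /AA sl /= mulrA -natrM; congr (_%:R * _).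
by rewrite mulnC muln_divA ?fact3_dvd // factS.
Qed.


Lemma KE (v : seq vec) :
  K v = \sum_(i < size v) \sum_(j < size v | (i < j)%N) wedge (nth 0 v i) (nth 0 v j).
Proof.
elim: v => [|x v IH]; first by rewrite big_ord0.
rewrite /= IH [RHS](big_ord_recl (size v)); congr (_ + _).
  rewrite [RHS]big_mkcond [RHS](big_ord_recl (size v)) /= add0r wedge_sumr (big_nth 0) big_mkord.
  by apply: eq_bigr.
apply: eq_bigr => i _; rewrite [RHS]big_mkcond [RHS](big_ord_recl (size v)) /= add0r [LHS]big_mkcond.
by apply: eq_bigr.
Qed.

Lemma nth_map_enum (N : nat) (T : Type) (x0 : T) (F : 'I_N -> T) (i : 'I_N) :
  nth x0 [seq F j | j <- enum 'I_N] i = F i.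
Proof. by rewrite (nth_map i) ?size_enum_ord // nth_ord_enum. Qed.

Lemma kappaK (n : nat) (a : 'I_n.+1 -> vec) (s : 'S_n.+1) :
  \sum_(i < n.+1) a i = 0 -> kappa a s = K [seq a (s i) | i <- enum 'I_n.+1].
Proof.
move=> H0; rewrite KE size_map size_enum_ord (bigD1 ord0) //=.
have -> : \sum_(j < n.+1 | (0 < j)%N) wedge [seq a (s i) | i <- enum 'I_n.+1]`_0
     [seq a (s i) | i <- enum 'I_n.+1]`_j = 0.
  rewrite -wedge_sumr.
  have -> : \sum_(j < n.+1 | (0 < j)%N) [seq a (s i) | i <- enum 'I_n.+1]`_j = - a (s ord0).
    apply/eqP; rewrite -addr_eq0.
    have -> : \sum_(j < n.+1 | (0 < j)%N) [seq a (s i) | i <- enum 'I_n.+1]`_j =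
              \sum_(j < n.+1 | j != ord0) a (s j).
      by apply: eq_big => j; [rewrite lt0n | rewrite nth_map_enum].
    have E1 : \sum_(j < n.+1) a (s j) = a (s ord0) + \sum_(j < n.+1 | j != ord0) a (s j).
      by rewrite (bigD1 ord0).
    rewrite (reindex_inj (@perm_inj _ s)) /= in H0.
    by rewrite addrC -E1 H0.
  by rewrite (nth_map_enum 0 _ ord0) wedgeNr wedgevv oppr0.
rewrite add0r /kappa; apply: eq_big => i; first by rewrite lt0n.
move=> _; apply: eq_bigr => j _; by rewrite !nth_map_enum.
Qed.


Lemma nth_rot_mod (T : Type) (x0 : T) (s : seq T) n i :
  (n <= size s)%N -> (i < size s)%N -> nth x0 (rot n s) i = nth x0 s ((i + n) %% size s).
Proof.
move=> ns iS; rewrite /rot nth_cat size_drop.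
case: ltnP => h.
  rewrite nth_drop modn_small; first by rewrite addnC.
  lia.
rewrite nth_take; last by lia.
have -> : (i + n = (i - (size s - n)) + size s)%N by lia.
rewrite modnDr modn_small //; lia.
Qed.

Definition rord (N : nat) (c i : 'I_N.+1) : 'I_N.+1 :=
  Ordinal (ltn_pmod (i + c) (ltn0Sn N)).

Lemma map_rot_enum (N : nat) (T : Type) (F : 'I_N.+1 -> T) (c : 'I_N.+1) :
  [seq F (rord c i) | i <- enum 'I_N.+1] = rot c [seq F i | i <- enum 'I_N.+1].
Proof.
apply: (@eq_from_nth _ (F ord0)); first by rewrite size_rot !size_map.
rewrite size_map size_enum_ord => k kN.
rewrite nth_rot_mod; last 2 first.
- by rewrite size_map size_enum_ord; apply: ltnW; apply: ltn_ord.
- by rewrite size_map size_enum_ord.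
rewrite size_map size_enum_ord.
rewrite (nth_map (Ordinal kN)) ?size_enum_ord // (nth_map (Ordinal kN)) ?size_enum_ord ?ltn_pmod //.
congr F; apply: val_inj => /=; rewrite !nth_enum_ord ?ltn_pmod //.
Qed.

Lemma rord0 (n : nat) (i : 'I_n.+1) : rord ord0 i = i.
Proof. by apply: val_inj; rewrite /= addn0 modn_small. Qed.

Lemma rord_comp (n : nat) (c d i : 'I_n.+1) : rord c (rord d i) = rord (rord c d) i.
Proof. by apply: val_inj; rewrite /= modnDml modnDmr addnA. Qed.

Lemma rord_inj (n : nat) (c : 'I_n.+1) : injective (rord c).
Proof.
move=> i j /(congr1 val) /= /eqP; rewrite eqn_modDr !modn_small // => /eqP h.
exact: val_inj.
Qed.

Definition rperm (n : nat) (c : 'I_n.+1) : 'S_n.+1 := perm (@rord_inj n c).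

Lemma orbitP (n : nat) (s s' : 'S_n.+1) :
  reflect (exists c, forall i, s' i = s (rord c i)) (s' \in cyc_orbit s).
Proof.
rewrite inE; apply: (iffP existsP) => [[c /forallP H]|[c H]]; exists c.
  move=> i; have /forallP /(_ (rord c i)) /implyP := H i.
  by move=> /(_ (eqxx _)) /eqP.
apply/forallP => i; apply/forallP => j; apply/implyP => /eqP hj.
have -> : j = rord c i by apply: val_inj; rewrite /= hj.
by rewrite H.
Qed.

Lemma orbit_refl (n : nat) (s : 'S_n.+1) : s \in cyc_orbit s.
Proof. by apply/orbitP; exists ord0 => i; rewrite rord0. Qed.

Lemma orbit_trans (n : nat) (s s' s'' : 'S_n.+1) :
  s' \in cyc_orbit s -> s'' \in cyc_orbit s' -> s'' \in cyc_orbit s.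
Proof.
case/orbitP => c Hc /orbitP [d Hd]; apply/orbitP; exists (rord c d) => i.
by rewrite Hd Hc rord_comp.
Qed.

Lemma orbit_sym (n : nat) (s s' : 'S_n.+1) :
  s' \in cyc_orbit s -> s \in cyc_orbit s'.
Proof.
case/orbitP => c Hc; apply/orbitP.
exists (Ordinal (ltn_pmod (n.+1 - c) (ltn0Sn n))) => i.
rewrite Hc rord_comp.
have -> : rord c (Ordinal (ltn_pmod (n.+1 - c) (ltn0Sn n))) = ord0.
  apply: val_inj; rewrite /= modnDml subnK ?modnn //; exact: ltnW.
by rewrite rord0.
Qed.

Lemma orbit_eq (n : nat) (s s' : 'S_n.+1) :
  s' \in cyc_orbit s -> cyc_orbit s' = cyc_orbit s.
Proof.
move=> H; apply/setP => x; apply/idP/idP => hx.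
  exact: orbit_trans H hx.
exact: orbit_trans (orbit_sym H) hx.
Qed.

Lemma F1 (R : nmodType) (n : nat) (F : 'S_n.+1 -> R) :
  (forall s s', s' \in cyc_orbit s -> F s' = F s) ->
  \sum_(O in Omega n.+1) F (repr O) = \sum_(s : 'S_n.+1 | s ord0 == ord_max) F s.
Proof.
move=> HF.
have -> : Omega n.+1 = (@cyc_orbit n.+1) @: [set s : 'S_n.+1 | s ord0 == ord_max].
  apply/setP => O; apply/imsetP/imsetP => [[s _ ->]|[s _ ->]]; last by exists s.
  pose p := (s^-1)%g ord_max.
  pose s0 := (rperm p * s)%g.
  have Hs0 : forall i, s0 i = s (rord p i) by move=> i; rewrite permM permE.
  exists s0.
    rewrite inE Hs0.
    have -> : rord p ord0 = p by apply: val_inj; rewrite /= add0n modn_small.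
    by rewrite permKV.
  apply/esym/orbit_eq; apply/orbitP; exists p; exact: Hs0.
rewrite big_imset /=; last first.
  move=> s1 s2; rewrite !inE => /eqP h1 /eqP h2 E.
  have : s1 \in cyc_orbit s2 by rewrite -E orbit_refl.
  case/orbitP => c Hc.
  have c0 : c = ord0.
    apply: (@perm_inj _ s2); rewrite h2 -h1 Hc.
    have -> : rord c ord0 = c by apply: val_inj; rewrite /= add0n modn_small.
    by [].
  by apply/permP => i; rewrite Hc c0 rord0.
apply: eq_big => s; first by rewrite inE.
move=> _; apply: HF; apply: mem_repr (orbit_refl s).
Qed.

Lemma sum_enum_perm (n : nat) (a : 'I_n.+1 -> vec) (s : 'S_n.+1) :
  \sum_(x <- [seq a (s i) | i <- enum 'I_n.+1]) x = \sum_(i < n.+1) a i.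
Proof.
rewrite big_map big_enum /= [RHS](reindex_inj (@perm_inj _ s)) /=.
by apply: eq_bigl => i.
Qed.

Lemma kappa_orb (n : nat) (a : 'I_n.+1 -> vec) (s s' : 'S_n.+1) :
  \sum_(i < n.+1) a i = 0 -> s' \in cyc_orbit s -> kappa a s' = kappa a s.
Proof.
move=> H0 /orbitP [c Hc]; rewrite !kappaK //.
have -> : [seq a (s' i) | i <- enum 'I_n.+1] = [seq a (s (rord c i)) | i <- enum 'I_n.+1].
  by apply: eq_map => i; rewrite Hc.
rewrite (map_rot_enum (fun i => a (s i))) K_rot //.
by rewrite sum_enum_perm.
Qed.

Definition lp (N : nat) (s : 'S_N) : seq nat := [seq (s i : nat) | i <- enum 'I_N].

Lemma map_perm_enum (N : nat) (s : 'S_N) : perm_eq [seq s i | i <- enum 'I_N] (enum 'I_N).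
Proof.
apply: uniq_perm; first by rewrite map_inj_uniq ?enum_uniq //; exact: perm_inj.
  exact: enum_uniq.
move=> x; rewrite mem_enum; apply/mapP; exists ((s^-1)%g x); first by rewrite mem_enum.
by rewrite permKV.
Qed.

Lemma lp_perm (n : nat) :
  perm_eq [seq lp s | s <- enum {perm 'I_n.+1}] (permutations (iota 0 n.+1)).
Proof.
apply: uniq_perm.
- rewrite map_inj_uniq ?enum_uniq // => s1 s2 E; apply/permP => i; apply: val_inj.
  have := congr1 (fun u => nth 0%N u i) E; rewrite /lp /=.
  by rewrite (nth_map_enum 0%N (fun j => nat_of_ord (s1 j))) (nth_map_enum 0%N (fun j => nat_of_ord (s2 j))).
- exact: permutations_uniq.
move=> u; rewrite mem_permutations; apply/mapP/idP.
  case=> s _ ->; rewrite /lp.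
  have -> : [seq nat_of_ord (s i) | i <- enum 'I_n.+1] = map val [seq s i | i <- enum 'I_n.+1].
    by elim: (enum _) => //= x e ->.
  by rewrite -val_enum_ord; apply: perm_map; exact: map_perm_enum.
move=> Hu.
have su : size u = n.+1 by rewrite (perm_size Hu) size_iota.
have uu : uniq u by rewrite (perm_uniq Hu) iota_uniq.
have lt : forall i : 'I_n.+1, (nth 0%N u i < n.+1)%N.
  move=> i; have : nth 0%N u i \in u by rewrite mem_nth // su.
  by rewrite (perm_mem Hu) mem_iota.
have inj : injective (fun i : 'I_n.+1 => (inord (nth 0%N u i) : 'I_n.+1)).
  move=> i j /(congr1 (@nat_of_ord _)); rewrite !inordK // => /eqP.
  by rewrite nth_uniq ?su // => /eqP; apply: val_inj.
exists (perm inj); first by rewrite mem_enum.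
rewrite /lp; apply: (@eq_from_nth _ 0%N); first by rewrite size_map size_enum_ord su.
move=> k; rewrite su => kN.
have := nth_map_enum 0%N (fun j => nat_of_ord (perm inj j)) (Ordinal kN).
rewrite /= permE => ->; rewrite inordK //; exact: (lt (Ordinal kN)).
Qed.

Lemma F3 (R : comUnitRingType) (t : R) (n : nat) (a : 'I_n.+1 -> vec) :
  \sum_(i < n.+1) a i = 0 ->
  \sum_(s : 'S_n.+1 | s ord0 == ord_max) t ^ K [seq a (s i) | i <- enum 'I_n.+1]
  = AA t [seq a i | i <- enum 'I_n.+1].
Proof.
move=> H0.
pose l := [seq a i | i <- enum 'I_n.+1].
pose f := fun k => nth 0 l k.
have fa : forall i : 'I_n.+1, f i = a i by move=> i; rewrite /f nth_map_enum.
have E1 : forall s : 'S_n.+1, [seq a (s i) | i <- enum 'I_n.+1] = map f (lp s).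
  by move=> s; rewrite /lp -map_comp; apply: eq_map => i /=; rewrite fa.
have E2 : \sum_(s : 'S_n.+1 | s ord0 == ord_max) t ^ K (map f (lp s)) =
          \sum_(u <- permutations (iota 0 n.+1) | head 0%N u == n) t ^ K (map f u).
  rewrite -(perm_big _ (lp_perm n)) big_map big_enum_cond /=.
  apply: eq_bigl => s; rewrite -nth0.
  have := nth_map_enum 0%N (fun j => nat_of_ord (s j)) ord0.
  by rewrite /lp /= => ->.
rewrite (eq_bigr (fun s => t ^ K (map f (lp s)))); last by move=> s _; rewrite E1.
rewrite E2.
have P : perm_eq (iota 0 n.+1) (n :: iota 0 n) by rewrite iotaS0 perm_rcons perm_refl.
have Hl : \sum_(k <- iota 0 n.+1) f k = 0.
  have := sum_l l; rewrite size_map size_enum_ord => <-.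
  by rewrite big_map big_enum /= -[RHS]H0; apply: eq_bigl.
have Hs : f n + \sum_(k <- iota 0 n) f k = 0.
  by move: Hl; rewrite (perm_big _ P) big_cons.
rewrite (perm_big _ (perm_permutations P)) (perm_big _ (permutationsE _)) // undup_id; last first.
  by rewrite /= mem_iota add0n ltnn andbF iota_uniq.
rewrite big_mkcond big_allpairs_dep big_cons /= eqxx.
rewrite [X in _ + X]big1_seq ?addr0; last first.
  move=> x; rewrite mem_iota add0n => /andP [_ xn].
  by apply: big1 => u _; rewrite (ltn_eqF xn).
rewrite /AA size_map size_enum_ord /= /SS; apply: eq_big_seq => u.
rewrite mem_permutations => Hu.
rewrite /= big_map (perm_big _ Hu).
have -> : \sum_(k <- iota 0 n) f k = - f n by apply/eqP; rewrite -addr_eq0 addrC Hs.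
by rewrite wedgeNr wedgevv oppr0 add0r.
Qed.

Theorem proposition1p3 (R : comUnitRingType) (t : R) (ht : t \is a GRing.unit)
    (N : nat) (hN : (3 <= N)%N) (a : 'I_N -> vec) (hsum : \sum_(i < N) a i = 0) :
  theta t [seq a i | i <- enum 'I_N] = (N`! %/ 3`!)%:R * mu t a.
Proof.
case: N a hsum hN => [|[|[|m]]] a hsum hN //.
rewrite /theta size_map size_enum_ord.
have -> : (m.+3 - 3 = m)%N by lia.
have sz : size [seq a i | i <- enum 'I_m.+3] = m.+3 by rewrite size_map size_enum_ord.
have sm : \sum_(x <- [seq a i | i <- enum 'I_m.+3]) x = 0.
  by rewrite big_map big_enum /= -[RHS]hsum; apply: eq_bigl.
rewrite (main_list ht sz sm); congr (_ * _).
have := @F1 R m.+2 (fun s => t ^ kappa a s).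
rewrite /mu /= => ->; last by move=> s s' H; rewrite (kappa_orb hsum H).
rewrite -F3 //; apply: eq_bigr => s _; by rewrite kappaK.
Qed.
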